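(* Assume that $X^\infty\cap\mathcal{K}(f)=\{0\}$. Then: (a) Problem (P) has a finite optimal value $f_*:=\inf_{x\in X}f(x)$, and $\mathrm{Sol}(P)$ is nonempty and compact. (b) Problem (P) has weak sharp minima at infinity: there exist constants $c>0$ and $R>0$ such that $$f(x)-f_*\ \ge\ c\,\mathrm{dist}(x,\mathrm{Sol}(P))\quad\text{for all } x\in X\setminus\mathbb{B}_R.$$ (c) $f$ is coercive on $X$, i.e. $f(x)\to+\infty$ whenever $x\in X$ and $\|x\|\to\infty$.
   Context: Standing assumptions: $f:\mathbb{R}^n\to\mathbb{R}\cup\{\pm\infty\}$ is proper (never $-\infty$ and finite at some point) and lower semicontinuous, with $\operatorname{dom}f=\{x:f(x)<+\infty\}$; $X\subset\mathbb{R}^n$ is a nonempty closed set with $\operatorname{dom}f\cap X$ unbounded. Problem (P) is $\inf_{x\in X}f(x)$ and $\mathrm{Sol}(P)=\{x\in X: f(x)\le f(y)\ \forall y\in X\}$. $\mathbb{B}_R$ is the open Euclidean ball of radius $R$ centered at $0$; $\mathrm{dist}(x,S)=\inf_{s\in S}\|x-s\|$. The asymptotic cone of $X$ is $X^\infty=\{u\in\mathbb{R}^n:\exists t_k\to+\infty,\ \exists x_k\in X,\ x_k/t_k\to u\}$. The asymptotic function of $f$ is $f^\infty(d)=\inf\{\liminf_{k\to\infty} f(t_kd_k)/t_k:\ t_k\to+\infty,\ d_k\to d\}$ (equivalently, $\operatorname{epi}f^\infty=(\operatorname{epi}f)^\infty$). $\mathcal{K}(f)=\{d\in\mathbb{R}^n: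 f^\infty(d)\le 0\}$. *)

(* Defs.v *)
(* R : realType, R^n = 'rV[R]_n (product topology =
   standard topology), extended reals \bar R. *)
From HB Require Import structures.
From mathcomp Require Import all_boot all_order all_algebra.
From mathcomp Require Import all_classical all_reals all_analysis.
Set Implicit Arguments. Unset Strict Implicit. Unset Printing Implicit Defensive.
Import Order.TTheory GRing.Theory Num.Theory.
Import numFieldNormedType.Exports.
Local Open Scope classical_set_scope.
Local Open Scope ring_scope.

Definition eucl_norm {R : realType} {n : nat} (x : 'rV[R]_n) : R :=
  Num.sqrt (\sum_(i < n) x ord0 i ^+ 2).

(* dist(x, S) = inf_{s in S} ||x - s|| (as an extended real; +oo if S empty) *)
Definition dist_set {R : realType} {n : nat} (x : 'rV[R]_n) (S : set 'rV[R]_n)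
  : \bar R := ereal_inf [set (eucl_norm (x - s))%:E | s in S].

Definition proper_fun {R : realType} {n : nat} (f : 'rV[R]_n -> \bar R) :=
  (forall x, f x != -oo%E) /\ (exists x, f x \is a fin_num).

Definition dom {R : realType} {n : nat} (f : 'rV[R]_n -> \bar R) :=
  [set x | (f x < +oo)%E].

Definition unbounded {R : realType} {n : nat} (S : set 'rV[R]_n) :=
  forall M : R, exists2 x, S x & M < eucl_norm x.

Definition asymp_cone {R : realType} {n : nat} (X : set 'rV[R]_n)
  : set 'rV[R]_n :=
  [set u | exists (t : nat -> R) (x : nat -> 'rV[R]_n),
      t @ \oo --> +oo /\ (forall k, X (x k)) /\
      (fun k => (t k)^-1 *: x k) @ \oo --> u].

Definition asymp_fun {R : realType} {n : nat} (f : 'rV[R]_n -> \bar R)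
  (d : 'rV[R]_n) : \bar R :=
  ereal_inf [set y | exists (t : nat -> R) (dk : nat -> 'rV[R]_n),
     t @ \oo --> +oo /\ dk @ \oo --> d /\
     y = limn_einf (fun k => (f (t k *: dk k) * ((t k)^-1)%:E)%E)].

Definition Kf {R : realType} {n : nat} (f : 'rV[R]_n -> \bar R) : set 'rV[R]_n :=
  [set d | (asymp_fun f d <= 0)%E].

Definition optval {R : realType} {n : nat} (f : 'rV[R]_n -> \bar R)
  (X : set 'rV[R]_n) : \bar R := ereal_inf (f @` X).

Definition Sol {R : realType} {n : nat} (f : 'rV[R]_n -> \bar R)
  (X : set 'rV[R]_n) : set 'rV[R]_n :=
  [set x | X x /\ forall y, X y -> (f x <= f y)%E].

(* Main.v *)
Require Import Defs.
From HB Require Import structures.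
From mathcomp Require Import all_boot all_order all_algebra.
From mathcomp Require Import all_classical all_reals all_analysis.
From mathcomp Require Import ring lra.
Import Order.TTheory GRing.Theory Num.Theory.
Import numFieldNormedType.Exports.
Local Open Scope classical_set_scope.
Local Open Scope ring_scope.
Lemma norm_coord {R : realType} {n : nat} (x : 'rV[R]_n) i : `|x ord0 i| <= `|x|.
Proof.
rewrite [X in _ <= X]/Num.norm /= mx_normrE.
exact: (le_bigmax _ (fun ij : 'I_1 * 'I_n => `|x ij.1 ij.2|) (ord0, i)).
Qed.
Lemma norm_le_coord {R : realType} {n : nat} (x : 'rV[R]_n) r : 0 <= r -> (forall i, `|x ord0 i| <= r) -> `|x| <= r.
Proof.
move=> r0 H; rewrite [X in X <= _]/Num.norm /= mx_normrE.
apply: bigmax_le => // -[i j] _ /=.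
by rewrite (ord1 i); apply: H.
Qed.
Lemma norm_le_eucl {R : realType} {n : nat} (x : 'rV[R]_n) : `|x| <= eucl_norm x.
Proof.
apply: norm_le_coord; first exact: sqrtr_ge0.
move=> i; rewrite -sqrtr_sqr /eucl_norm ler_sqrt; last by apply: sumr_ge0 => j _; exact: sqr_ge0.
rewrite (bigD1 i) //= lerDl; apply: sumr_ge0 => j _; exact: sqr_ge0.
Qed.
Lemma eucl_le_norm {R : realType} {n : nat} (x : 'rV[R]_n) : eucl_norm x <= n.+1%:R * `|x|.
Proof.
have h0 : 0 <= n.+1%:R * `|x| by rewrite mulr_ge0.
rewrite -[X in _ <= X]ger0_norm // -sqrtr_sqr /eucl_norm ler_sqrt; last exact: sqr_ge0.
apply: (@le_trans _ _ (\sum_(i < n) `|x|^+2)).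
  apply: ler_sum => i _; rewrite -real_normK ?num_real //.
  by rewrite lerXn2r ?nnegrE ?normr_ge0 ?norm_coord.
rewrite sumr_const card_ord exprMn -mulr_natl.
rewrite mulr1 -[X in X <= _]mulr_natl.
apply: ler_wpM2r; first exact: sqr_ge0.
by rewrite -natrX ler_nat (leq_trans (leqnSn n)) // -[X in (X <= _)%N]expn1 leq_pexp2l.
Qed.
Section LSC.
Local Open Scope ereal_scope.
Lemma lsc_min {R : realType} {T : topologicalType} (f : T -> \bar R) (K : set T) :
  lower_semicontinuous f -> (forall x, f x != -oo) -> compact K -> K !=set0 ->
  exists2 z, K z & forall y, K y -> f z <= f y.
Proof.
move=> lsc fN cK [y0 Ky0].
pose B y := [set x | K x /\ f x <= f y].
have FF : Filter (filter_from K B).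
  apply: filter_from_filter; first by exists y0.
  move=> i j Ki Kj; have [fij|fji] := leP (f i) (f j).
    exists i => // x [Kx fx]; split; split => //; exact: le_trans fij.
  exists j => // x [Kx fx]; split; split => //; exact: le_trans (ltW fji).
have PF : ProperFilter (filter_from K B).
  by apply: filter_from_proper => i Ki; exists i.
have [|z [Kz clz]] := cK _ PF.
  by exists y0 => // x [].
exists z => // y Ky; rewrite leNgt; apply/negP => fyz.
have fyfin : f y \is a fin_num.
  by rewrite fin_numE fN /= lt_eqF // (lt_le_trans fyz (leey _)).
have [V nV HV] := lsc z (fine (f y)) ltac:(by rewrite fineK).
have [w [[Kw fw] Vw]] := clz (B y) V (ex_intro2 _ _ y Ky (fun x h => h)) nV.
by move: (HV w Vw); rewrite fineK // ltNge fw.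
Qed.
End LSC.


Lemma growth {R : realType} {n : nat} (f : 'rV[R]_n -> \bar R) (X : set 'rV[R]_n) :
  (forall x, f x != -oo%E) ->
  (forall d, asymp_cone X d -> Kf f d -> d = 0) ->
  exists c r : R, 0 < c /\ forall x, X x -> r <= `|x| -> ((c * `|x|)%:E <= f x)%E.
Proof.
move=> fN hK; apply: contrapT => H.
have hx : forall m : nat, exists x, X x /\ m.+1%:R <= `|x| /\
    (f x < (m.+1%:R^-1 * `|x|)%:E)%E.
  move=> m; apply: contrapT => Hm; apply: H; exists m.+1%:R^-1, m.+1%:R; split.
    by rewrite invr_gt0 ltr0n.
  move=> x Xx mx; rewrite leNgt; apply/negP => lt; apply: Hm; exists x; split => //.
have [xs Hxs] := choice hx.
pose t m := `|xs m|.
have tpos m : 0 < t m.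
  by case: (Hxs m) => _ [h _]; exact: lt_le_trans h.
pose u m := (t m)^-1 *: xs m.
have nu m : `|u m| = 1.
  by rewrite normrZ ger0_norm ?invr_ge0 ?ltW // mulVf // gt_eqF.
pose Bx := [set v : 'rV[R]_n | forall i, `[(-1)%R, 1%R]%classic (v ord0 i)].
have cB : compact Bx.
  exact: (rV_compact (fun i : 'I_n => @segment_compact R (-1) 1)).

have uB m : Bx (u m).
  by move=> i; rewrite /= in_itv /= -ler_norml -(nu m); exact: norm_coord.
have [d [Bd cld]] : Bx `&` cluster (u @ \oo) !=set0.
  by apply: cB; exists 0%N => // m _; exact: uB.
have hphi : forall k, exists j, (k <= j)%N /\ `|d - u j| < k.+1%:R^-1.
  move=> k.
  have [] := cld (u @` [set j | (k <= j)%N]) (ball d k.+1%:R^-1).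
  - by exists k => // j /= kj; exists j.
  - by apply: nbhsx_ballx; rewrite invr_gt0 ltr0n.
  move=> _ [[j kj <-] bj]; exists j; split => //.
  by rewrite -ball_normE in bj.
have [phi Hphi] := choice hphi.
have dn0 : d != 0.
  apply/eqP => d0; move: (Hphi 0%N).2; rewrite d0 sub0r normrN nu invr1.
  by rewrite ltxx.
have tinv m : (t m)^-1 != 0 by rewrite invr_eq0 gt_eqF.
have tu m : t m *: u m = xs m by rewrite /u scalerA mulfV ?scale1r // gt_eqF.
have tcvg : (fun k => t (phi k)) @ \oo --> +oo.
  apply: (@ger_cvgy _ _ _ _ (fun k : nat => k%:R)); last exact: cvgr_idn.
  apply: nearW => k; case: (Hxs (phi k)) => _ [h _].
  apply: le_trans h; rewrite ler_nat; exact: leq_trans (Hphi k).1 (leqnSn _).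
have ucvg : (fun k => u (phi k)) @ \oo --> d.
  apply/cvgrPdist_lt => e e0.
  have := @cvg_harmonic R; move/cvgrPdist_lt => /(_ e e0) hh.
  near=> k.
  have hk : `|0 - harmonic k| < e by near: k; exact: hh.
  rewrite sub0r normrN /harmonic /= ger0_norm in hk; last by rewrite invr_ge0.
  exact: lt_trans (Hphi k).2 hk.
move/eqP: dn0; apply; apply: hK.
- exists (fun k => t (phi k)), (fun k => xs (phi k)); split => //.
  by split; first by move=> k; case: (Hxs (phi k)).
- rewrite /Kf /= /asymp_fun.
  apply: le_trans; first apply: ereal_inf_lbound.
    by exists (fun k => t (phi k)), (fun k => u (phi k)); split; last split.
  under eq_fun do rewrite tu.
  rewrite limn_einf_lim.
  have hl : limn (EFin \o @harmonic R) = 0%E by apply: cvg_lim => //; exact: cvge_harmonic.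
  rewrite -hl; apply: lee_lim.
  - exact: is_cvg_einfs.
  - by apply/cvg_ex; eexists; exact: cvge_harmonic.
  apply: nearW => k.
  apply: le_trans; first by apply: ereal_inf_lbound; exists k => /=.
  case: (Hxs (phi k)) => _ [_ hf].
  apply: le_trans.
    apply: (lee_wpmul2r _ (ltW hf)); rewrite lee_fin invr_ge0; exact: ltW.
  rewrite -EFinM lee_fin -/(t (phi k)) mulrK; last by rewrite unitfE gt_eqF.
  rewrite /harmonic /= lef_pV2 ?posrE ?ltr0n // ler_nat ltnS; exact: (Hphi k).1.
Unshelve. all: end_near.
Qed.

Theorem mainTheorem1 (R : realType) (n : nat) (f : 'rV[R]_n -> \bar R)
  (X : set 'rV[R]_n)
  (hproper : proper_fun f) (hlsc : lower_semicontinuous f)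
  (hXne : X !=set0) (hXcl : closed X) (hunb : unbounded (dom f `&` X))
  (hK : asymp_cone X `&` Kf f = [set 0]) :
  (* (a) *)
  (exists fstar : R, optval f X = fstar%:E /\
     (Sol f X !=set0) /\ compact (Sol f X)) /\
  (* (b) *)
  (exists c Rr : R, 0 < c /\ 0 < Rr /\
     forall x, X x -> Rr <= eucl_norm x ->
       (c%:E * dist_set x (Sol f X) <= f x - optval f X)%E) /\
  (* (c) *)
  (forall M : R, exists r : R, forall x, X x -> r < eucl_norm x -> (M%:E < f x)%E).
Proof.
have fN : forall x, f x != -oo%E by case: hproper.
have hK' : forall d, asymp_cone X d -> Kf f d -> d = 0.
  by move=> d h1 h2; have : (asymp_cone X `&` Kf f) d by []; rewrite hK.
have [c [r [c0 hg]]] := @growth R n f X fN hK'.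
have [a [doma Xa] _] := hunb 0.
have fafin : f a \is a fin_num by rewrite fin_numE fN /= lt_eqF.
set fa := fine (f a).
have faE : f a = fa%:E by rewrite /fa fineK.
pose rho := Num.max (Num.max r `|a|) (`|fa| / c).
have rhoa : `|a| <= rho by rewrite le_max le_max lexx orbT.
have rho0 : 0 <= rho by apply: le_trans rhoa.
have far : forall x, X x -> rho < `|x| -> (f a < f x)%E.
  move=> x Xx hx; apply: lt_le_trans (hg x Xx _); last first.
    by apply: ltW; apply: le_lt_trans hx; rewrite le_max le_max lexx.
  rewrite faE lte_fin; apply: (le_lt_trans (ler_norm fa)).
  have : `|fa| / c < `|x| by apply: le_lt_trans hx; rewrite le_max lexx orbT.
  by rewrite ltr_pdivrMr // mulrC.
pose Bx := [set v : 'rV[R]_n | forall i, `[(-rho)%R, rho]%classic (v ord0 i)].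
have cB : compact Bx.
  exact: (rV_compact (fun i : 'I_n => @segment_compact R (-rho) rho)).
have Bxn : forall x, Bx x <-> `|x| <= rho.
  move=> x; split.
    by move=> h; apply: norm_le_coord => // i; have := h i; rewrite /= in_itv /= -ler_norml.
  by move=> h i; rewrite /= in_itv /= -ler_norml; exact: le_trans (norm_coord _ _) h.
pose K := Bx `&` X.
have cK : compact K by apply: compact_closedI.
have Ka : K a by split => //; apply/Bxn.
have [z Kz zmin] := @lsc_min R _ f K hlsc fN cK (ex_intro _ a Ka).
have zle : (f z <= f a)%E by exact: zmin.
have zsol : forall y, X y -> (f z <= f y)%E.
  move=> y Xy; have [hy|hy] := leP `|y| rho.
    by apply: zmin; split => //; apply/Bxn.
  by apply: le_trans zle _; apply: ltW; apply: far.
have Solz : Sol f X z by split => //; case: Kz.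
have fzfin : f z \is a fin_num.
  by rewrite fin_numE fN /= lt_eqF // (le_lt_trans zle) // faE ltry.
set fstar := fine (f z).
have fzE : f z = fstar%:E by rewrite /fstar fineK.
have optE : optval f X = fstar%:E.
  rewrite -fzE; apply/eqP; rewrite eq_le; apply/andP; split.
    by apply: ereal_inf_lbound; exists z => //; case: Kz.
  by apply: le_ereal_inf_tmp => y [x Xx <-]; exact: zsol.
have SolK : Sol f X `<=` K.
  move=> x [Xx hx]; split => //; apply/Bxn; rewrite leNgt; apply/negP => hr.
  have := far x Xx hr; rewrite ltNge; move/negP; apply.
  exact: le_trans (hx z (proj2 Kz)) zle.
have Solcl : closed (Sol f X).
  have -> : Sol f X = X `&` ~` [set x | (fstar%:E < f x)%E].
    apply/seteqP; split => x /=.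
      move=> [Xx hx]; split => //; rewrite -fzE; apply/negP; rewrite -leNgt.
      exact: hx z (proj2 Kz).
    move=> [Xx hx]; split => // y Xy; apply: le_trans (zsol y Xy).
    by rewrite fzE leNgt; apply/negP.
  apply: closedI => //; apply: open_closedC; exact: (proj1 (lower_semicontinuousP f) hlsc).
have CN : forall x : 'rV[R]_n, eucl_norm x <= n.+1%:R * `|x| by move=> x; exact: eucl_le_norm.
have C0 : 0 < n.+1%:R :> R by rewrite ltr0n.
split.
  exists fstar; split => //; split; first by exists z.
  exact: subclosed_compact Solcl cK SolK.
split.
  pose m := Num.max r (2 * `|fstar| / c + `|z|).
  have m0 : 0 <= m.
    have h0 : 0 <= 2 * `|fstar| / c + `|z|.
      by apply: addr_ge0 => //; apply: divr_ge0 => //; exact: ltW.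
    by apply: le_trans h0 _; rewrite le_max lexx orbT.
  exists (c / (2 * n.+1%:R)), (n.+1%:R * m + 1); split; first by rewrite divr_gt0 // mulr_gt0.
  split; first by rewrite ltr_wpDl // mulr_ge0 // ltW.
  move=> x Xx hx; rewrite optE.
  have hx' : m < `|x|.
    rewrite -(ltr_pM2l C0); apply: lt_le_trans (CN x).
    by apply: lt_le_trans hx; rewrite ltrDl.
  have hfx : ((c * `|x|)%:E <= f x)%E.
    by apply: hg => //; apply: ltW; apply: le_lt_trans hx'; rewrite le_max lexx.
  have hd : (dist_set x (Sol f X) <= (n.+1%:R * (`|x| + `|z|))%:E)%E.
    apply: le_trans; first by apply: ereal_inf_lbound; exists z.
    rewrite lee_fin; apply: le_trans (CN _) _; rewrite ler_pM2l //; exact: ler_normB.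
  apply: le_trans (lee_wpmul2l _ hd) _; first by rewrite lee_fin divr_ge0 // ?mulr_ge0 // ltW.
  apply: le_trans _ (leeB hfx (lexx fstar%:E)).
  rewrite -EFinM -EFinB lee_fin.
  have h : 2 * `|fstar| / c + `|z| < `|x| by apply: le_lt_trans hx'; rewrite le_max lexx orbT.
  have cn0 : c != 0 by rewrite gt_eqF.
  have Cn0 : n.+1%:R != 0 :> R by rewrite gt_eqF.
  have e1 : c / (2 * n.+1%:R) * (n.+1%:R * (`|x| + `|z|)) = c / 2 * (`|x| + `|z|) by field.
  have h2 : c / 2 * (2 * `|fstar| / c + `|z|) < c / 2 * `|x| by rewrite ltr_pM2l // divr_gt0.
  have e2 : c / 2 * (2 * `|fstar| / c + `|z|) = `|fstar| + c / 2 * `|z| by field.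
  rewrite e1; rewrite e2 in h2; have := ler_norm fstar.
  move: h2; set A := c / 2 * `|z|; set B := c / 2 * `|x|.
  have -> : c * `|x| = 2 * B by rewrite /B; field.
  rewrite mulrDr -/B -/A; lra.
move=> M.
exists (n.+1%:R * Num.max r ((`|M| + 1) / c)) => x Xx hx.
have hx' : Num.max r ((`|M| + 1) / c) < `|x|.
  by rewrite -(ltr_pM2l C0); apply: lt_le_trans hx (CN x).
apply: lt_le_trans (hg x Xx _); last by apply: ltW; apply: le_lt_trans hx'; rewrite le_max lexx.
rewrite lte_fin.
have : (`|M| + 1) / c < `|x| by apply: le_lt_trans hx'; rewrite le_max lexx orbT.
rewrite ltr_pdivrMr // mulrC => h.
apply: le_lt_trans h; apply: le_trans (ler_norm M) _; rewrite lerDl //.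
Qed.
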